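(* Let $V$ be a locally convex space, $\Omega\subset V$ open, and $g$ a Riemannian metric on $\Omega$ with Levi–Civita connection $D=d+A$ of class $C^1$ and curvature $R$. Let $I\subset\mathbb R$ be an interval, $x\in C^2(I,\Omega)$ a geodesic, $\xi\in C^1(I,V)$, and $\tau\in I$. Suppose there is a collection $H$ of Jacobi fields $\eta$ along $x|J_\eta$, where $J_\eta\subset I$ is a neighborhood of $\tau$, such that each $\eta\in H$ vanishes at $\tau$ and $\{\dot\eta(\tau)\colon\eta\in H\}$ is dense in $V$. Then for every $\eta\in H$ the function $t\mapsto g\big(x(t),\xi(t),\eta(t)\big)$ is twice differentiable at $\tau$, and $D_{\dot x}\xi(\tau)=0$ if and only if $$ \frac{d^2}{dt^2}g\big(x(t),\xi(t),\eta(t)\big)\Big|_{t=\tau}=0\qquad\text{for all }\eta\in H. $$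
   Context: All locally convex spaces are real, Hausdorff and sequentially complete. $f$ is $C^1$ if directional derivatives $df(v,\xi)=\lim_{t\to0}(f(v+t\xi)-f(v))/t$ exist and $df$ is continuous; $C^k$ inductively. A Riemannian metric on $\Omega$ is a map $g\colon\Omega\times V\times V\to\mathbb R$ with each $g(v,\cdot,\cdot)$ positive definite symmetric bilinear. For a $C^1$ metric $g$, a Levi–Civita connection is $D_\xi\varphi(v)=d\varphi(v,\xi)+A(v,\xi)\varphi(v)$ with $A(v,\xi)$ a continuous linear map $V\to V$, linear in $\xi$, $(v,\xi,w)\mapsto A(v,\xi)w$ continuous, $A(v,\xi)\eta=A(v,\eta)\xi$, and $\xi g(\cdot,\varphi,\psi)=g(\cdot,D_\xi\varphi,\psi)+g(\cdot,\varphi,D_\xi\psi)$ for all $\xi\in V$, $\varphi,\psi\in C^1(\Omega,V)$; it is of class $C^k$ if $(v,\xi,w)\mapsto A(v,\xi)w$ is $C^k$. Its curvature is $R(v,\xi,\eta)=(\xi A(\cdot,\eta))(v)-(\eta A(\cdot,\xi))(v)+A(v,\xi)A(v,\eta)-A(v,\eta)A(v,\xi)$. For $x\in C^1(I,\Omega)$ and $\varphi\in C^1(I,V)$, $D_{\dot x}\varphi(t)=\dot\varphi(t)+A\big(x(t),\dot x(t)\big)\varphi(t)$ (dot is $d/dt$). A geodesic is a $C^2$ curve with $D_{\dot x}\dot x=0$. A Jacobi field along a geodesic $x$ (on an interval $J$) is $\varphi\in C^2(J,V)$ with $D_{\dot x}^2\varphi=R(x,\dot x,\varphi)\dot x$.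 *)

(* Defs.v *)
From HB Require Import structures.
From mathcomp Require Import all_boot all_order all_algebra.
From mathcomp Require Import all_classical all_reals all_analysis.
Set Implicit Arguments. Unset Strict Implicit. Unset Printing Implicit Defensive.
Import Order.TTheory GRing.Theory Num.Theory.
Import numFieldNormedType.Exports.
Local Open Scope classical_set_scope.
Local Open Scope ring_scope.

Section Defs.
Variable R : realType.

(** Limits and convergence in a tvs (tvsType is not a pointed type, so the
    library's [lim]/[cvg] do not apply; we use the same definitions with the
    default point 0). *)
Definition tcvg (W : tvsType R) (F : set_system W) : Prop := exists l : W, F --> l.
Definition tlim (W : tvsType R) (F : set_system W) : W := xget 0 (fun l : W => F --> l).

Definition seq_complete (V : tvsType R) : Prop :=
  forall u : nat -> V, cauchy (fmap u \oo) -> tcvg (u @ \oo).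

Definition dquot (U W : tvsType R) (f : U -> W) (v xi : U) (t : R) : W :=
  t^-1 *: (f (v + t *: xi) - f v).

Definition dirder (U W : tvsType R) (f : U -> W) (v xi : U) : W :=
  tlim (dquot f v xi t @[t --> (0 : R)^']).

Definition dd (U W : tvsType R) (f : U -> W) (p : U * U) : W := dirder f p.1 p.2.

Fixpoint Ck (k : nat) : forall (U W : tvsType R), set U -> (U -> W) -> Prop :=
  match k with
  | 0 => fun U W O f => forall v, O v -> {for v, continuous f}
  | k'.+1 => fun U W O f =>
      (forall v xi, O v -> tcvg (dquot f v xi t @[t --> (0 : R)^'])) /\
      Ck k' (O `*` setT) (dd f)
  end.

(** Derivatives of curves c : I -> W, taken within the interval I
    (one-sided at endpoints of I). *)
Definition cquot (W : tvsType R) (c : R -> W) (t0 t : R) : W :=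
  (t - t0)^-1 *: (c t - c t0).

Definition cderivable (W : tvsType R) (I : set R) (c : R -> W) (t0 : R) : Prop :=
  tcvg (cquot c t0 t @[t --> within (I `\ t0) (nbhs t0)]).

Definition cder (W : tvsType R) (I : set R) (c : R -> W) (t0 : R) : W :=
  tlim (cquot c t0 t @[t --> within (I `\ t0) (nbhs t0)]).

Fixpoint Ccurve (k : nat) (W : tvsType R) (I : set R) (c : R -> W) : Prop :=
  match k with
  | 0 => {within I, continuous c}
  | k'.+1 => (forall t, I t -> cderivable I c t) /\ Ccurve k' I (cder I c)
  end.

Definition twice_derivable_at (W : tvsType R) (J : set R) (f : R -> W) (tau : R) : Prop :=
  (exists2 e : R, 0 < e & forall t, J t -> `|t - tau| < e -> cderivable J f t) /\
  cderivable J (cder J f) tau.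

Variable V : tvsType R.

Definition riemannian_metric (O : set V) (g : V -> V -> V -> R) : Prop :=
  forall v, O v ->
    [/\ forall a xi eta zeta, g v (a *: xi + eta) zeta = a * g v xi zeta + g v eta zeta,
        forall a xi eta zeta, g v zeta (a *: xi + eta) = a * g v zeta xi + g v zeta eta,
        forall xi eta, g v xi eta = g v eta xi
      & forall xi, xi != 0 -> 0 < g v xi xi].

Definition uncurry3 (W : tvsType R) (h : V -> V -> V -> W) (p : V * V * V) : W :=
  h p.1.1 p.1.2 p.2.

(** D_xi phi (v) = d phi (v, xi) + A(v, xi) phi(v);  A v xi w stands for A(v,xi)w *)
Definition cov_der (A : V -> V -> V -> V) (phi : V -> V) (v xi : V) : V :=
  dirder phi v xi + A v xi (phi v).

Definition levi_civita (O : set V) (g : V -> V -> V -> R) (A : V -> V -> V -> V) : Prop :=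
  [/\
      (forall v xi, O v -> linear (A v xi) /\ continuous (A v xi)),
      (forall v w, O v -> linear (fun xi => A v xi w)),
      Ck 0 (O `*` setT `*` setT) (uncurry3 A),
      (forall v xi eta, O v -> A v xi eta = A v eta xi)
    &
      (forall (xi : V) (phi psi : V -> V), Ck 1 O phi -> Ck 1 O psi ->
         forall v, O v ->
           dquot (fun u => g u (phi u) (psi u)) v xi t @[t --> (0 : R)^'] -->
             g v (cov_der A phi v xi) (psi v) + g v (phi v) (cov_der A psi v xi))].

Definition curvature (A : V -> V -> V -> V) (v xi eta w : V) : V :=
  dirder (fun u => A u eta w) v xi - dirder (fun u => A u xi w) v eta
  + A v xi (A v eta w) - A v eta (A v xi w).

Definition cov_der_curve (A : V -> V -> V -> V) (I : set R) (x phi : R -> V) (t : R) : V :=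
  cder I phi t + A (x t) (cder I x t) (phi t).

Definition geodesic (O : set V) (A : V -> V -> V -> V) (I : set R) (x : R -> V) : Prop :=
  [/\ Ccurve 2 I x, (forall t, I t -> O (x t))
    & forall t, I t -> cov_der_curve A I x (cder I x) t = 0].

Definition jacobi_field (A : V -> V -> V -> V) (J : set R) (x phi : R -> V) : Prop :=
  Ccurve 2 J phi /\
  forall t, J t ->
    cov_der_curve A J x (cov_der_curve A J x phi) t =
    curvature A (x t) (cder J x t) (phi t) (cder J x t).

End Defs.

(* Main.v *)
Require Import Defs.
From HB Require Import structures.
From mathcomp Require Import all_boot all_order all_algebra.
From mathcomp Require Import all_classical all_reals all_analysis.
From mathcomp Require Import ring lra.
Import Order.TTheory GRing.Theory Num.Theory.
Import numFieldNormedType.Exports.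
Local Open Scope classical_set_scope.
Local Open Scope ring_scope.

Set Implicit Arguments. Unset Strict Implicit. Unset Printing Implicit Defensive.

Section Gen.
Context {R : realType}.

Lemma tcvgD (W : tvsType R) (T : Type) (F : set_system T) {FF : Filter F} (f g : T -> W) a b :
  f x @[x --> F] --> a -> g x @[x --> F] --> b -> f x + g x @[x --> F] --> a + b.
Proof.
move=> Hf Hg.
apply: (cvg_comp (fun x => (f x, g x)) (fun z : W * W => z.1 + z.2) (cvg_pair Hf Hg)).
exact: (@add_continuous W (a, b)).
Qed.
Lemma tcvgZ (W : tvsType R) (T : Type) (F : set_system T) {FF : Filter F} (s : T -> R) (f : T -> W) (k : R) (a : W) :
  s x @[x --> F] --> k -> f x @[x --> F] --> a -> s x *: f x @[x --> F] --> k *: a.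
Proof.
move=> Hs Hf.
apply: (cvg_comp (fun x => (s x : R^o, f x)) (fun z : R^o * W => z.1 *: z.2) (cvg_pair Hs Hf)).
exact: (@scale_continuous R W (k : R^o, a)).
Qed.
Lemma tcvgN (W : tvsType R) (T : Type) (F : set_system T) {FF : Filter F} (f : T -> W) a :
  f x @[x --> F] --> a -> - f x @[x --> F] --> - a.
Proof.
move=> Hf; apply: (cvg_comp f (fun z : W => - z) Hf).
exact: (@opp_continuous W a).
Qed.
Lemma unif_curve (W : tvsType R) (T : Type) (F : set_system T) {FF : Filter F}
  (h : T -> R) (q : T -> W) (p w : W) :
  h i @[i --> F] --> 0 -> q i @[i --> F] --> w ->
  forall N, nbhs (p, w) N ->
  \forall i \near F, forall s, `|s| <= `|h i| -> N (p + s *: q i, q i).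
Proof.
move=> Hh Hq N HN.
have HPhi : (fun z : R^o * W => (p + z.1 *: z.2, z.2)) @ nbhs ((0:R^o), w) --> (p, w).
  have E : (p, w) = (p + (0:R^o) *: w, w) by rewrite scale0r addr0.
  rewrite [X in _ --> X]E.
  apply: cvg_pair; last exact: cvg_snd.
  apply: tcvgD; first exact: cvg_cst.
  by apply: tcvgZ; [exact: cvg_fst | exact: cvg_snd].
have [[B1 B2] /= [HB1 HB2] Hsub] := HPhi _ HN.
move/nbhs_norm0P: HB1 => [d /= d0 Hd].
have Hh' : \forall i \near F, `|h i| < d.
  move/cvgrPdist_lt: Hh => /(_ d d0); apply: filterS => i.
  by rewrite sub0r normrN.
near=> i => s hs; apply: (Hsub (s : R^o, q i)); split => /=.
  apply: Hd => /=; apply: le_lt_trans hs _; near: i; exact: Hh'.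
by near: i; apply: Hq.
Unshelve. all: by end_near. Qed.

Lemma unif_cont (W : tvsType R) (T : Type) (F : set_system T) {FF : Filter F}
  (z : T -> W) (p : W) :
  z i @[i --> F] --> 0 ->
  forall N, nbhs (p, 0) N ->
  \forall i \near F, forall s : R, `|s| <= 1 -> N (p + s *: z i, z i).
Proof.
move=> Hz N [[N1 N2] /= [HN1 HN2] Hsub].
have HPhi : (fun y : R^o * W => p + y.1 *: y.2) @ nbhs ((0:R^o), (0:W)) --> p.
  have E : p = p + (0:R^o) *: (0:W) by rewrite scale0r addr0.
  rewrite [X in _ --> X]E.
  apply: tcvgD; first exact: cvg_cst.
  by apply: tcvgZ; [exact: cvg_fst | exact: cvg_snd].
have [[B1 B2] /= [HB1 HB2] Hsub2] := HPhi _ HN1.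
move/nbhs_norm0P: HB1 => [d /= d0 Hd].
have Hz2 : (2 / d) *: z i @[i --> F] --> (2 / d) *: (0:W).
  by apply: tcvgZ; [exact: cvg_cst | exact: Hz].
rewrite scaler0 in Hz2.
near=> i => s hs; apply: (Hsub (_, _)); split => /=; last by near: i; apply: Hz.
have -> : s *: z i = (s * (d / 2)) *: ((2 / d) *: z i).
  rewrite scalerA; congr (_ *: _); field; exact: lt0r_neq0.
apply: (Hsub2 (_ : R^o, _)); split => /=; last by near: i; apply: Hz2.
apply: Hd => /=; rewrite normrM (gtr0_norm (_ : 0 < d / 2)) ?divr_gt0 //.
have := normr_ge0 s; nra.
Unshelve. all: by end_near. Qed.



Lemma tlimE (W : tvsType R) (F : set_system W) (PF : ProperFilter F) :
  hausdorff_space W -> forall l, F --> l -> tlim F = l.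
Proof.
move=> hW l Fl; rewrite /tlim; case: xgetP => [l' _ Fl'|/(_ l) //].
exact: (cvg_unique hW Fl' Fl).
Qed.

Lemma tlimE_R (F : set_system R) (PF : ProperFilter F) l : F --> l -> tlim F = l.
Proof. by apply: tlimE; exact: Rhausdorff. Qed.

Lemma tcvg_tlim (W : tvsType R) (F : set_system W) : tcvg F -> F --> tlim F.
Proof. case=> l Fl; rewrite /tlim; case: xgetP => [l' _ //|/(_ l) //]. Qed.

Lemma within_neq (J : set R) (t0 : R) :
  \forall t \near within (J `\ t0) (nbhs t0), J t /\ t != t0.
Proof.
have : within (J `\ t0) (nbhs t0) (J `\ t0) by apply: withinT.
apply: filterS => t [Jt Ht].
by split => //; apply/eqP.
Qed.

Lemma within_sub0 (t0 : R) (J : set R) :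
  t - t0 @[t --> within (J `\ t0) (nbhs t0)] --> 0.
Proof.
apply: cvg_within_filter.
have H : t - t0 @[t --> t0] --> t0 - t0 by apply: cvgB; [exact: cvg_id | exact: cvg_cst].
by rewrite subrr in H.
Qed.

Lemma cquot_cont (W : tvsType R) (J : set R) (t0 : R) (c : R -> W) (l : W) :
  cquot c t0 t @[t --> within (J `\ t0) (nbhs t0)] --> l ->
  c t @[t --> within (J `\ t0) (nbhs t0)] --> c t0.
Proof.
move=> Hc.
have H1 : c t0 + (t - t0) *: cquot c t0 t @[t --> within (J `\ t0) (nbhs t0)] --> c t0 + 0 *: l.
  by apply: tcvgD; [exact: cvg_cst | exact: tcvgZ (within_sub0 t0 J) Hc].
rewrite scale0r addr0 in H1.
apply: cvg_trans H1; apply: near_eq_cvg.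
have := within_neq J t0; apply: filterS => t [_ Ht].
by rewrite /cquot scalerA mulfV ?subr_eq0 // scale1r addrC subrK.
Qed.
Lemma near_point (K : set R) (t u d : R) : is_interval K -> K t -> K u -> u != t -> 0 < d ->
  exists v, [/\ K v, v != t & `|t - v| < d].
Proof.
move=> Ki Kt Ku ut d0.
have ut0 : 0 < `|u - t| by rewrite normr_gt0 subr_eq0.
set r := d / (d + 2 * `|u - t|).
have dp : 0 < d + 2 * `|u - t| by lra.
have r0 : 0 < r by rewrite divr_gt0.
have rE : r * (d + 2 * `|u - t|) = d by rewrite /r mulfVK // gt_eqF.
have r1 : r < 1 by nra.
exists (t + r * (u - t)); split.
- case: (ltgtP t u) => [tu|ut'|e].
  + apply: (Ki t u Kt Ku); apply/andP; split; nra.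
  + apply: (Ki u t Ku Kt); apply/andP; split; nra.
  + by move: ut; rewrite e eqxx.
- by rewrite -subr_eq0 addrAC subrr add0r mulf_eq0 negb_or gt_eqF //= subr_eq0.
- rewrite opprD addrA subrr sub0r normrN normrM (gtr0_norm r0); nra.
Qed.

Lemma closure_J (K : set R) (t u : R) : is_interval K -> K t -> K u -> u != t ->
  closure (K `\ t) t.
Proof.
move=> Ki Kt Ku ut B /nbhs_normP [d /= d0 Hd].
have [v [Kv vt tv]] := near_point Ki Kt Ku ut d0.
exists v; split; first by split => //; apply/eqP.
by apply: Hd.
Qed.

Lemma within_trans (W : tvsType R) (J I : set R) (t0 : R) (c : R -> W) (l : W) :
  J `<=` I -> c t @[t --> within (I `\ t0) (nbhs t0)] --> l ->
  c t @[t --> within (J `\ t0) (nbhs t0)] --> l.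
Proof.
move=> JI Hc U HU; apply: (within_subset _ _ (Hc U HU)).
by move=> t [Jt Ht]; split => //; apply: JI.
Qed.

Section core.
Context (W : tvsType R) (O3 : set W) (O3o : open O3) (G : W -> R) (hG : Ck 1 O3 G).

Lemma dG_is_derive (b q : W) (s : R) : O3 (b + s *: q) ->
  is_derive s 1 (fun s => G (b + s *: q)) (dd G (b + s *: q, q)).
Proof.
move=> Ob; have [l Hl] := hG.1 _ q Ob.
have E : dd G (b + s *: q, q) = l by rewrite /dd /dirder /=; exact: tlimE_R.
rewrite E.
have E2 : (fun t : R => t^-1 *: ((fun s => G (b + s *: q)) (t *: 1 + s) - (fun s => G (b + s *: q)) s)) = dquot G (b + s *: q) q.
  apply/funext => t; rewrite /dquot /= scalerDl addrA (_ : t%:A = t); last exact: mulr1.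
  by rewrite (addrAC b).
apply: DeriveDef.
  by rewrite /derivable E2; apply/cvg_ex; exists l.
by rewrite /derive E2; apply: cvg_lim.
Qed.

Lemma mvt_core (T : Type) (F : set_system T) (PF : Filter F) (b q : T -> W) (h : T -> R) p w :
  O3 p ->
  (\forall i \near F, h i != 0) ->
  (forall N, nbhs (p, w) N -> \forall i \near F, forall s, `|s| <= `|h i| -> N (b i + s *: q i, q i)) ->
  (h i)^-1 * (G (b i + h i *: q i) - G (b i)) @[i --> F] --> dd G (p, w).
Proof.
move=> Op hne HN; apply/cvgrPdist_lt => e e0.
have Hc := hG.2 (p, w) (conj Op I).
have N0 : nbhs (p, w) [set z | O3 z.1 /\ `|dd G (p, w) - dd G z| < e].
  apply: filterI.
    exists (O3, setT) => /=; last by move=> [z1 z2] [].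
    by split; [exact: open_nbhs_nbhs | exact: filterT].
  by move/cvgrPdist_lt: Hc; apply.
have := HN _ N0; apply: filter_app; apply: filter_app hne.
near=> i => hi0 Hs.
set hi := h i; set bi := b i; set qi := q i.
pose phi := fun s => G (bi + s *: qi).
pose df := fun s => dd G (bi + s *: qi, qi).
have Hd : forall s : R, `|s| <= `|hi| -> is_derive s (1:R) phi (df s).
  by move=> s /Hs [Os _]; exact: dG_is_derive.
have Hd' : forall a c : R, a < c -> (forall s : R, a <= s <= c -> `|s| <= `|hi|) ->
  exists2 x, `|x| <= `|hi| & phi c - phi a = df x * (c - a).
  move=> a c ac Hac.
  have Hin : forall x, x \in `[a, c] -> `|x| <= `|hi|.
    by move=> x; rewrite in_itv /= => /Hac.
  have H1 : forall x, x \in `]a, c[ -> is_derive x (1:R) phi (df x).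
    move=> x xin; apply: Hd; apply: Hin.
    by move: xin; rewrite !in_itv /= => /andP[/ltW -> /ltW ->].
  have H2 : {within `[a, c], continuous phi}.
    apply: derivable_within_continuous => x /Hin /Hd H; exact: (@ex_derive _ _ _ _ _ _ _ H).
  have [x xin Hx] := MVT ac H1 H2.
  exists x => //; apply: Hin.
  by move: xin; rewrite !in_itv /= => /andP[/ltW -> /ltW ->].
have phi0 : phi 0 = G bi by rewrite /phi scale0r addr0.
have [x Hx Heq] : exists2 x, `|x| <= `|hi| & phi hi - phi 0 = df x * hi.
  case: (ltgtP hi 0) => [hn|hp|he].
  - have B : forall s : R, hi <= s <= 0 -> `|s| <= `|hi|.
      move=> s /andP[H1 H2]; rewrite (ltr0_norm hn) ler0_norm //.
      by rewrite lerN2.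
    have [x Hx E] := Hd' hi 0 hn B.
    by exists x => //; rewrite -opprB E sub0r mulrN opprK.
  - have B : forall s : R, 0 <= s <= hi -> `|s| <= `|hi|.
      by move=> s /andP[H1 H2]; rewrite (gtr0_norm hp) ger0_norm.
    have [x Hx E] := Hd' 0 hi hp B.
    by exists x => //; rewrite E subr0.
  - by move: hi0; rewrite -/hi he eqxx.
have := (Hs x Hx).2; congr (`|_ - _| < _).
by rewrite /= -phi0 -[G (bi + hi *: qi)]/(phi hi) Heq mulrCA mulVf // mulr1.
Unshelve. all: by end_near. Qed.

Lemma dd0 p : dd G (p, 0) = 0.
Proof.
rewrite /dd /dirder /=.
have -> : dquot G p 0 = fun _ => 0.
  by apply/funext => t; rewrite /dquot scaler0 addr0 subrr scaler0.
apply: tlimE_R; exact: cvg_cst.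
Qed.

Lemma G_cont (T : Type) (F : set_system T) (FF : Filter F) (y : T -> W) p :
  O3 p -> y i @[i --> F] --> p -> G (y i) @[i --> F] --> G p.
Proof.
move=> Op Hy.
have Hz : y i - p @[i --> F] --> 0.
  have H : y i + - p @[i --> F] --> p + - p by apply: tcvgD => //; exact: cvg_cst.
  by rewrite subrr in H.
have H := @mvt_core T F FF (fun _ => p) (fun i => y i - p) (fun _ => 1) p 0 Op _ _.
have H1 : \forall i \near F, (fun _ => (1:R)) i != 0 by apply: nearW => i; exact: oner_neq0.
have {}H := H H1.
have H2 : forall N, nbhs (p, 0) N -> \forall i \near F, forall s : R,
    `|s| <= `|(fun _ => (1:R)) i| -> N ((fun _ => p) i + s *: (y i - p), y i - p).
  by move=> N HN; apply: filterS (unif_cont Hz HN) => i Hi s; rewrite normr1; exact: Hi.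
have {}H := H H2.
rewrite dd0 in H.
have H3 : G p + (1^-1 * (G (p + 1 *: (y i - p)) - G p)) @[i --> F] --> G p + 0.
  by apply: cvgD => //; exact: cvg_cst.
rewrite addr0 in H3.
apply: cvg_trans H3; apply: near_eq_cvg; apply: nearW => i /=.
by rewrite invr1 mul1r scale1r addrC subrK addrC subrK.
Qed.

Lemma mvt_curve (J : set R) (t0 : R) (c : R -> W) (w : W) :
  O3 (c t0) -> cquot c t0 t @[t --> within (J `\ t0) (nbhs t0)] --> w ->
  cquot (G \o c) t0 t @[t --> within (J `\ t0) (nbhs t0)] --> dd G (c t0, w).
Proof.
move=> Oc Hc.
have FW : Filter (within (J `\ t0) (nbhs t0)) by typeclasses eauto.
have H := @mvt_core R (within (J `\ t0) (nbhs t0)) FW (fun _ => c t0) (cquot c t0)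
  (fun t => t - t0) (c t0) w Oc.
have H1 : \forall t \near within (J `\ t0) (nbhs t0), t - t0 != 0.
  by apply: filterS (within_neq J t0) => t [_ Ht]; rewrite subr_eq0.
have {}H := H H1.
have {}H := H (fun N HN => unif_curve (within_sub0 t0 J) Hc HN).
have {}H := H FW.
eapply cvg_trans; [|exact H]; apply: near_eq_cvg.
have := within_neq J t0; apply: filterS => t [_ Ht].
by rewrite /cquot /= scalerA mulfV ?subr_eq0 // scale1r (addrC (c t0)) subrK.
Qed.

End core.
Section main.
Context (V : tvsType R) (V_hausdorff : hausdorff_space V) (O : set V) (O_open : open O)
  (g : V -> V -> V -> R) (A : V -> V -> V -> V)
  (hg : riemannian_metric O g) (hg1 : Ck 1 (O `*` setT `*` setT) (uncurry3 g))
  (hA : levi_civita O g A).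

Local Notation O3 := (O `*` [set: V] `*` [set: V]).
Local Notation G := (uncurry3 g).

Lemma O3_open : open O3.
Proof.
rewrite openE => -[[v b] d] [[Ov _] _].
exists (O `*` setT, setT) => /=; last by move=> [[v' b'] d'] [].
split => //=; last exact: filterT.
exists (O, setT) => /=; last by move=> [v' b'] [].
by split; [exact: open_nbhs_nbhs | exact: filterT].
Qed.

Section lin.
Context (v : V) (Ov : O v).
Let hv := hg Ov.
Lemma g1D x y z : g v (x + y) z = g v x z + g v y z.
Proof. by case: hv => H1 _ _ _; have := H1 1 x y z; rewrite scale1r mul1r. Qed.
Lemma g2D x y z : g v z (x + y) = g v z x + g v z y.
Proof. by case: hv => _ H1 _ _; have := H1 1 x y z; rewrite scale1r mul1r. Qed.
Lemma g10 z : g v 0 z = 0.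
Proof. have H := g1D 0 0 z; rewrite addr0 in H. by apply: (addrI (g v 0 z)); rewrite -H addr0. Qed.
Lemma g20 z : g v z 0 = 0.
Proof. have H := g2D 0 0 z; rewrite addr0 in H. by apply: (addrI (g v z 0)); rewrite -H addr0. Qed.
Lemma g1Z a x z : g v (a *: x) z = a * g v x z.
Proof. by case: hv => H1 _ _ _; have := H1 a x 0 z; rewrite addr0 g10 addr0. Qed.
Lemma g2Z a x z : g v z (a *: x) = a * g v z x.
Proof. by case: hv => _ H1 _ _; have := H1 a x 0 z; rewrite addr0 g20 addr0. Qed.
Lemma g1N x z : g v (- x) z = - g v x z.
Proof. by rewrite -scaleN1r g1Z mulN1r. Qed.
Lemma g2N x z : g v z (- x) = - g v z x.
Proof. by rewrite -scaleN1r g2Z mulN1r. Qed.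
Lemma g1B x y z : g v (x - y) z = g v x z - g v y z.
Proof. by rewrite g1D g1N. Qed.
Lemma g2B x y z : g v z (x - y) = g v z x - g v z y.
Proof. by rewrite g2D g2N. Qed.

Lemma AD xi x y : A v xi (x + y) = A v xi x + A v xi y.
Proof. by case: hA => H _ _ _ _; have := (H v xi Ov).1 1 x y; rewrite !scale1r. Qed.
Lemma A0 xi : A v xi 0 = 0.
Proof. have H := AD xi 0 0; rewrite addr0 in H. by apply: (addrI (A v xi 0)); rewrite -H addr0. Qed.
Lemma AZ xi a x : A v xi (a *: x) = a *: A v xi x.
Proof. by case: hA => H _ _ _ _; have := (H v xi Ov).1 a x 0; rewrite !addr0 A0 addr0. Qed.
Lemma AB xi x y : A v xi (x - y) = A v xi x - A v xi y.
Proof. by rewrite AD -scaleN1r AZ scaleN1r. Qed.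
End lin.
Lemma dirder_cst (b xi v : V) : dirder (fun _ : V => b) v xi = 0.
Proof.
rewrite /dirder.
have -> : dquot (fun _ : V => b) v xi = fun _ => 0.
  by apply/funext => t; rewrite /dquot subrr scaler0.
by apply: tlimE => //; exact: cvg_cst.
Qed.

Lemma Ck1_cst (b : V) : Ck 1 O (fun _ : V => b).
Proof.
have E : forall v xi, dquot (fun _ : V => b) v xi = fun _ => 0.
  by move=> v xi; apply/funext => t; rewrite /dquot subrr scaler0.
split.
  by move=> v xi _; exists 0; rewrite E; exact: cvg_cst.
move=> p _ /=.
have -> : dd (fun _ : V => b) = fun _ => 0 by apply/funext => p'; exact: dirder_cst.
exact: cst_continuous.
Qed.

Lemma pd1 (v b d a : V) : O v -> dd G ((v, b, d), (a, 0, 0)) = g v (A v a b) d + g v b (A v a d).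
Proof.
move=> Ov.
case: hA => _ _ _ _ Hc.
have H := Hc a (fun _ => b) (fun _ => d) (Ck1_cst b) (Ck1_cst d) v Ov.
rewrite /cov_der !dirder_cst !add0r in H.
rewrite /dd /dirder /=.
have -> : dquot G (v, b, d) (a, 0, 0) = dquot (fun u => g u b d) v a.
  apply/funext => t; rewrite /dquot /uncurry3 /=.
  by rewrite !scaler0 !addr0.
exact: tlimE_R.
Qed.
Lemma PR (J : set R) (t0 : R) (a b d : R -> V) (a' b' d' : V) :
  (forall t, J t -> O (a t)) -> O (a t0) ->
  cquot a t0 t @[t --> within (J `\ t0) (nbhs t0)] --> a' ->
  cquot b t0 t @[t --> within (J `\ t0) (nbhs t0)] --> b' ->
  cquot d t0 t @[t --> within (J `\ t0) (nbhs t0)] --> d' ->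
  cquot (fun t => g (a t) (b t) (d t)) t0 t @[t --> within (J `\ t0) (nbhs t0)] -->
    g (a t0) (b' + A (a t0) a' (b t0)) (d t0) + g (a t0) (b t0) (d' + A (a t0) a' (d t0)).
Proof.
move=> OJ Oa0 Ha Hb Hd.
have FW : Filter (within (J `\ t0) (nbhs t0)) by typeclasses eauto.
have Ca := cquot_cont Ha; have Cd := cquot_cont Hd.
have T1 : G (a t, cquot b t0 t, d t) @[t --> within (J `\ t0) (nbhs t0)] --> G (a t0, b', d t0).
  have H := @G_cont _ _ O3_open _ hg1 _ _ FW (fun t => (a t, cquot b t0 t, d t)) (a t0, b', d t0).
  apply: H.
    by [].
  exact: (cvg_pair (cvg_pair Ca Hb) Cd).
have T2 : G (a t, b t0, cquot d t0 t) @[t --> within (J `\ t0) (nbhs t0)] --> G (a t0, b t0, d').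
  apply: (@G_cont _ _ O3_open _ hg1 _ _ FW (fun t => (a t, b t0, cquot d t0 t)) (a t0, b t0, d')).
    by [].
  exact: (cvg_pair (cvg_pair Ca (cvg_cst (b t0))) Hd).
pose c := fun t => (a t, b t0, d t0).
have Ec : cquot c t0 = fun t => (cquot a t0 t, 0, 0).
  apply/funext => t.
  rewrite -[LHS]/((t - t0)^-1 *: (a t - a t0), (t - t0)^-1 *: (b t0 - b t0), (t - t0)^-1 *: (d t0 - d t0)).
  by rewrite !subrr !scaler0.
have T3 : cquot (G \o c) t0 t @[t --> within (J `\ t0) (nbhs t0)] --> dd G (c t0, (a', 0, 0)).
  apply: (mvt_curve O3_open hg1) => //.
  rewrite Ec; exact: (cvg_pair (cvg_pair Ha (cvg_cst 0)) (cvg_cst 0)).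
rewrite /c pd1 // in T3.
rewrite /uncurry3 /= in T1 T2.
have T := @cvgD _ _ _ _ FW _ _ _ _ (@cvgD _ _ _ _ FW _ _ _ _ T1 T2) T3.
have E : g (a t0) b' (d t0) + g (a t0) (b t0) d' + (g (a t0) (A (a t0) a' (b t0)) (d t0) + g (a t0) (b t0) (A (a t0) a' (d t0))) =
  g (a t0) (b' + A (a t0) a' (b t0)) (d t0) + g (a t0) (b t0) (d' + A (a t0) a' (d t0)).
  rewrite g1D // g2D //; lra.
rewrite E in T.
eapply cvg_trans; [|exact T]; apply: near_eq_cvg.
apply: filterS (within_neq J t0) => t [Jt Ht] /=.
rewrite /cquot /c /uncurry3 /=.
rewrite -[LHS]/(g (a t) ((t - t0)^-1 *: (b t - b t0)) (d t) + g (a t) (b t0) ((t - t0)^-1 *: (d t - d t0)) + (t - t0)^-1 *: (g (a t) (b t0) (d t0) - g (a t0) (b t0) (d t0))).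
have Oat := OJ t Jt.
rewrite g1Z // g2Z // g1B // g2B //.
rewrite -[_ *: (g (a t) _ _ - _)]/((t - t0)^-1 * (g (a t) (b t0) (d t0) - g (a t0) (b t0) (d t0))).
rewrite -[_ *: (g (a t) (b t) _ - _)]/((t - t0)^-1 * (g (a t) (b t) (d t) - g (a t0) (b t0) (d t0))).
ring.
Qed.
Lemma dirder_loc0 (phi : V -> V) (v xi : V) : O v -> (forall u, O u -> phi u = 0) ->
  dirder phi v xi = 0.
Proof.
move=> Ov H0; rewrite /dirder; apply: tlimE => //.
have Ht : t @[t --> (0:R)^'] --> (0:R) by apply: cvg_within_filter; exact: cvg_id.
have H : v + t *: xi @[t --> (0:R)^'] --> v + 0 *: xi.
  by apply: tcvgD; [exact: cvg_cst | exact: (tcvgZ Ht (cvg_cst xi))].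
rewrite scale0r addr0 in H.
have HO : \forall t \near (0:R)^', O (v + t *: xi) := H O (open_nbhs_nbhs (conj O_open Ov)).
have E : \forall t \near (0:R)^', (fun _ : R => (0:V)) t = dquot phi v xi t.
  apply: filterS HO => t Ot /=.
  by rewrite /dquot H0 // H0 // subrr scaler0.
apply: cvg_trans (near_eq_cvg E) _; exact: cvg_cst.
Qed.

Lemma A0' (v w : V) : O v -> A v 0 w = 0.
Proof.
move=> Ov; case: hA => _ H _ _ _; have := (H v w Ov) 1 0 0.
rewrite scale1r addr0 scale1r => E.
by apply: (addrI (A v 0 w)); rewrite -E addr0.
Qed.

Lemma dirder_dir0 (phi : V -> V) (v : V) : dirder phi v 0 = 0.
Proof.
rewrite /dirder.
have -> : dquot phi v 0 = fun _ => 0.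
  by apply/funext => t; rewrite /dquot scaler0 addr0 subrr scaler0.
by apply: tlimE => //; exact: cvg_cst.
Qed.

Lemma curv0 (v a w : V) : O v -> curvature A v a 0 w = 0.
Proof.
move=> Ov; rewrite /curvature dirder_dir0.
rewrite (@dirder_loc0 (fun u => A u 0 w)) //; last by move=> u Ou; rewrite A0'.
by rewrite !A0' // A0 // subrr add0r subrr.
Qed.
Lemma scaleRE (k a : R) : k *: a = k * a.
Proof. by []. Qed.

Section final.
Context (I : set R) (x : R -> V) (hx : geodesic O A I x)
  (xi : R -> V) (hxi : Ccurve 1 I xi) (tau : R) (htau : I tau).

Lemma key (J : set R) (eta : R -> V) :
  is_interval J -> J `<=` I -> J tau -> (forall t, J t -> exists u, J u /\ u != t) ->
  jacobi_field A J x eta -> eta tau = 0 ->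
  [/\ (forall t, J t -> cderivable J (fun t => g (x t) (xi t) (eta t)) t),
   cderivable J (cder J (fun t => g (x t) (xi t) (eta t))) tau &
   cder J (cder J (fun t => g (x t) (xi t) (eta t))) tau =
    g (x tau) (cov_der_curve A I x xi tau) (cder J eta tau) +
    g (x tau) (cov_der_curve A I x xi tau) (cder J eta tau)].
Proof.
move=> Ji JI Jtau Jnd [heta jeq] eta0.
case: hx => hx2 Ox _.
case: hx2 => dx [ddx _].
case: hxi => dxi cxi.
case: heta => deta [ddeta _].
have PJ : forall t, J t -> ProperFilter (within (J `\ t) (nbhs t)).
  move=> t Jt; have [u [Ju ut]] := Jnd t Jt.
  exact: (@within_nbhs_proper _ _ _ (closure_J Ji Jt Ju ut)).
have OJ : forall t, J t -> O (x t) by move=> t Jt; apply: Ox; apply: JI.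
have Hx : forall t, J t -> cquot x t s @[s --> within (J `\ t) (nbhs t)] --> cder I x t.
  by move=> t Jt; apply: (within_trans JI); exact: tcvg_tlim (dx t (JI t Jt)).
have Ex : forall t, J t -> cder J x t = cder I x t.
  by move=> t Jt; have PJt := PJ t Jt; exact: (tlimE _ V_hausdorff (Hx t Jt)).
have Hxi : forall t, J t -> cquot xi t s @[s --> within (J `\ t) (nbhs t)] --> cder I xi t.
  by move=> t Jt; apply: (within_trans JI); exact: tcvg_tlim (dxi t (JI t Jt)).
have Heta : forall t, J t -> cquot eta t s @[s --> within (J `\ t) (nbhs t)] --> cder J eta t.
  by move=> t Jt; exact: tcvg_tlim (deta t Jt).
set f := fun t => g (x t) (xi t) (eta t).
set Dxi := fun t => cov_der_curve A I x xi t.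
set Deta := fun t => cov_der_curve A J x eta t.
have Hf : forall t, J t -> cquot f t s @[s --> within (J `\ t) (nbhs t)] -->
    g (x t) (Dxi t) (eta t) + g (x t) (xi t) (Deta t).
  move=> t Jt.
  have := PR OJ (OJ t Jt) (Hx t Jt) (Hxi t Jt) (Heta t Jt).
  by rewrite /Dxi /Deta /cov_der_curve (Ex t Jt).
have Ef : forall t, J t -> cder J f t = g (x t) (Dxi t) (eta t) + g (x t) (xi t) (Deta t).
  by move=> t Jt; have PJt := PJ t Jt; exact: (tlimE_R _ (Hf t Jt)).
have FW : Filter (within (J `\ tau) (nbhs tau)) by typeclasses eauto.
have PJtau := PJ tau Jtau.
have Otau := OJ tau Jtau.
have HAc : forall p, (O `*` [set: V] `*` [set: V]) p -> {for p, continuous (uncurry3 A)}.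
  by case: hA => _ _ HA _ _; exact: HA.
have Cx := cquot_cont (Hx tau Jtau).
have Cxi := cquot_cont (Hxi tau Jtau).
have Cdx : cder I x t @[t --> within (J `\ tau) (nbhs tau)] --> cder I x tau.
  apply: (within_trans JI); exact: cquot_cont (tcvg_tlim (ddx tau htau)).
have Cdxi : cder I xi t @[t --> within (J `\ tau) (nbhs tau)] --> cder I xi tau.
  have := (subspace_continuousP I (cder I xi)).1 cxi tau htau.
  move=> H U HU; apply: (within_subset _ _ (H U HU)).
  by move=> t [Jt _]; apply: JI.
have CDxi : Dxi t @[t --> within (J `\ tau) (nbhs tau)] --> Dxi tau.
  apply: tcvgD => //.
  exact: (cvg_comp _ _ (cvg_pair (cvg_pair Cx Cdx) Cxi) (HAc (x tau, cder I x tau, xi tau) _)).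
have T1 : uncurry3 g (x t, Dxi t, cquot eta tau t) @[t --> within (J `\ tau) (nbhs tau)] -->
    uncurry3 g (x tau, Dxi tau, cder J eta tau).
  apply: (@G_cont _ _ O3_open _ hg1 _ _ FW (fun t => (x t, Dxi t, cquot eta tau t))) => //.
  exact: (cvg_pair (cvg_pair Cx CDxi) (Heta tau Jtau)).
rewrite /uncurry3 /= in T1.
have Deta0 : Deta tau = cder J eta tau.
  by rewrite /Deta /cov_der_curve eta0 A0 // addr0.
have Heta' := tcvg_tlim (ddeta tau Jtau).
set Deta' := cder J (cder J eta) tau + A (x tau) (cder I x tau) (cder J eta tau).
have HDeta : cquot Deta tau t @[t --> within (J `\ tau) (nbhs tau)] --> Deta'.
  have HA1 : A (x t) (cder I x t) (cquot eta tau t) @[t --> within (J `\ tau) (nbhs tau)] -->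
      A (x tau) (cder I x tau) (cder J eta tau).
    exact: (cvg_comp _ _ (cvg_pair (cvg_pair Cx Cdx) (Heta tau Jtau))
              (HAc (x tau, cder I x tau, cder J eta tau) _)).
  have H := tcvgD Heta' HA1.
  have E : \forall t \near within (J `\ tau) (nbhs tau),
      (fun t => cquot (cder J eta) tau t + A (x t) (cder I x t) (cquot eta tau t)) t = cquot Deta tau t.
    apply: filterS (within_neq J tau) => t [Jt Ht] /=.
    have Oxt := OJ t Jt.
    rewrite /cquot Deta0 {1}/Deta /cov_der_curve (Ex t Jt) eta0 subr0 AZ //.
    by rewrite -scalerDr addrAC.
  apply: cvg_trans (near_eq_cvg E) _.
  exact: H.
have T2 := PR OJ Otau (Hx tau Jtau) (Hxi tau Jtau) HDeta.
have Jac : Deta' + A (x tau) (cder I x tau) (Deta tau) = 0.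
  have := jeq tau Jtau.
  have Ecd : cder J Deta tau = Deta' := tlimE _ V_hausdorff HDeta.
  have Ecx := Ex tau Jtau.
  rewrite /cov_der_curve -/Deta Ecd Ecx eta0 curv0 // A0 // addr0 -Deta0.
  done.
rewrite Jac g20 // addr0 Deta0 in T2.
have T := @cvgD _ _ _ _ FW _ _ _ _ T1 T2.
have E : \forall t \near within (J `\ tau) (nbhs tau),
    (fun t => g (x t) (Dxi t) (cquot eta tau t) + cquot (fun t => g (x t) (xi t) (Deta t)) tau t) t
    = cquot (cder J f) tau t.
  apply: filterS (within_neq J tau) => t [Jt Ht] /=.
  have Oxt := OJ t Jt.
  rewrite /cquot (Ef t Jt) (Ef tau Jtau) eta0 g20 // add0r subr0 g2Z //.
  rewrite !scaleRE; ring.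
have Tf : cquot (cder J f) tau t @[t --> within (J `\ tau) (nbhs tau)] -->
    g (x tau) (Dxi tau) (cder J eta tau) + g (x tau) (Dxi tau) (cder J eta tau).
  apply: cvg_trans (near_eq_cvg E) _; exact: T.
split.
- by move=> t Jt; exists (g (x t) (Dxi t) (eta t) + g (x t) (xi t) (Deta t)); exact: Hf.
- by exists (g (x tau) (Dxi tau) (cder J eta tau) + g (x tau) (Dxi tau) (cder J eta tau)).
- exact: (tlimE_R _ Tf).
Qed.




Lemma final_main (hI : is_interval I) (hI2 : exists a b, [/\ I a, I b & a < b])
  (H : set (set R * (R -> V)))
  (hH : forall Je, H Je ->
     [/\ is_interval Je.1, Je.1 `<=` I,
         (exists2 e : R, 0 < e & forall t, I t -> `|t - tau| < e -> Je.1 t),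
         jacobi_field A Je.1 x Je.2
       & Je.2 tau = 0])
  (hdense : closure [set cder Je.1 Je.2 tau | Je in H] = setT) :
  (forall Je, H Je ->
     twice_derivable_at Je.1 (fun t => g (x t) (xi t) (Je.2 t)) tau) /\
  (cov_der_curve A I x xi tau = 0 <->
   forall Je, H Je ->
     cder Je.1 (cder Je.1 (fun t => g (x t) (xi t) (Je.2 t))) tau = 0).
Proof.
have Oxtau : O (x tau) by case: hx => _ Ox _; exact: Ox.
have [tau' [Itau' tau'ne]] : exists tau', I tau' /\ tau' != tau.
  case: hI2 => a [b [Ia Ib ab]].
  case: (eqVneq a tau) => [atau|ane]; last by exists a.
  by exists b; split => //; rewrite -atau gt_eqF.
have Hkey : forall Je, H Je ->
  [/\ (forall t, Je.1 t -> cderivable Je.1 (fun t => g (x t) (xi t) (Je.2 t)) t),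
   cderivable Je.1 (cder Je.1 (fun t => g (x t) (xi t) (Je.2 t))) tau &
   cder Je.1 (cder Je.1 (fun t => g (x t) (xi t) (Je.2 t))) tau =
    g (x tau) (cov_der_curve A I x xi tau) (cder Je.1 Je.2 tau) +
    g (x tau) (cov_der_curve A I x xi tau) (cder Je.1 Je.2 tau)].
  move=> Je HJe; have [Ji JI [e e0 He] jac eta0] := hH Je HJe.
  have Jtau : Je.1 tau by apply: He => //; rewrite subrr normr0.
  have [v [Iv vne vd]] := near_point hI htau Itau' tau'ne e0.
  have Jv : Je.1 v by apply: He => //; rewrite distrC.
  apply: key => //.
  move=> t Jt; case: (eqVneq t tau) => [->|tne]; first by exists v.
  by exists tau; split => //; rewrite eq_sym.
split.
  move=> Je HJe; have [h1 h2 _] := Hkey Je HJe; split => //.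
  by exists 1 => // t Jt _; exact: h1.
set D := cov_der_curve A I x xi tau.
split.
  by move=> D0 Je HJe; have [_ _ ->] := Hkey Je HJe; rewrite -/D D0 g10 // addr0.
move=> Hall.
case: (eqVneq D 0) => // Dne; exfalso.
have pos : 0 < g (x tau) D D by case: (hg Oxtau) => _ _ _; apply.
have Zs : forall w, [set cder Je.1 Je.2 tau | Je in H] w -> g (x tau) D w = 0.
  move=> w [Je HJe <-]; have [_ _ E] := Hkey Je HJe.
  by have := Hall Je HJe; rewrite E -/D; lra.
have Cg : g (x tau) D w @[w --> D] --> g (x tau) D D.
  have := @G_cont _ _ O3_open _ hg1 _ _ _ (fun w => (x tau, D, w)) (x tau, D, D).
  apply => //.
  exact: (cvg_pair (cvg_pair (cvg_cst (x tau)) (cvg_cst D)) cvg_id).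
have Hn : \forall w \near D, `|g (x tau) D D - g (x tau) D w| < g (x tau) D D.
  by move/cvgrPdist_lt: Cg; apply.
have Dcl : closure [set cder Je.1 Je.2 tau | Je in H] D by rewrite hdense.
have [w [Sw Bw]] := Dcl _ Hn.
move: Bw; rewrite /= (Zs w Sw) subr0 gtr0_norm //.
by rewrite ltxx.
Qed.

End final.

End main.

End Gen.

Theorem lemma7p2 (R : realType) (V : tvsType R)
  (V_hausdorff : hausdorff_space V) (V_seqc : seq_complete V)
  (O : set V) (O_open : open O)
  (g : V -> V -> V -> R) (A : V -> V -> V -> V)
  (hg : riemannian_metric O g) (hg1 : Ck 1 (O `*` setT `*` setT) (uncurry3 g))
  (hA : levi_civita O g A) (hA1 : Ck 1 (O `*` setT `*` setT) (uncurry3 A))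
  (I : set R) (hI : is_interval I) (hI2 : exists a b, [/\ I a, I b & a < b])
  (x : R -> V) (hx : geodesic O A I x)
  (xi : R -> V) (hxi : Ccurve 1 I xi)
  (tau : R) (htau : I tau)
  (H : set (set R * (R -> V)))
  (hH : forall Je, H Je ->
     [/\ is_interval Je.1, Je.1 `<=` I,
         (exists2 e : R, 0 < e & forall t, I t -> `|t - tau| < e -> Je.1 t),
         jacobi_field A Je.1 x Je.2
       & Je.2 tau = 0])
  (hdense : closure [set cder Je.1 Je.2 tau | Je in H] = setT) :
  (forall Je, H Je ->
     twice_derivable_at Je.1 (fun t => g (x t) (xi t) (Je.2 t)) tau) /\
  (cov_der_curve A I x xi tau = 0 <->
   forall Je, H Je ->
     cder Je.1 (cder Je.1 (fun t => g (x t) (xi t) (Je.2 t))) tau = 0).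
Proof.
exact: (final_main V_hausdorff O_open hg hg1 hA hx hxi htau hI hI2 hH hdense).
Qed.
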